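(* Let $0<c<1$ and $0<d<1$ be irrational numbers, and let $f(n)=[c(n+1)]-[cn]$ and $g(n)=[d(n+1)]-[dn]$. Then for every real $t\ge0$, $$\sum_{n\le t} f(n)\,g([cn]+1)=[d([c([t]+1)]+1)],$$ where the sum is over positive integers $n\le t$.
   Context: $[x]$ is the greatest integer not exceeding $x$. Note $f$ is the indicator of $\{[j/c]:j\ge1\}$ and $g$ the indicator of $\{[j/d]:j\ge1\}$. *)

(* Defs.v *)
From HB Require Import structures.
From mathcomp Require Import all_boot all_order all_algebra.
From mathcomp Require Import reals.
Set Implicit Arguments. Unset Strict Implicit. Unset Printing Implicit Defensive.
Import Order.TTheory GRing.Theory Num.Theory.
Local Open Scope ring_scope.

(* [x] = Num.floor x (greatest integer not exceeding x), an int. *)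

Definition fdiff (R : realType) (c : R) (n : int) : int :=
  Num.floor (c * (n + 1)%:~R) - Num.floor (c * n%:~R).

(* Main.v *)
Require Import Defs.
From HB Require Import structures.
From mathcomp Require Import all_boot all_order all_algebra.
From mathcomp Require Import reals zify.
Import Order.TTheory GRing.Theory Num.Theory.
Local Open Scope ring_scope.

Lemma step_floor (R : realType) (c x : R) : 0 < c -> c < 1 ->
  Num.floor (x + c) = Num.floor x \/ Num.floor (x + c) = Num.floor x + 1.
Proof.
move=> c0 c1.
have h1 : Num.floor x <= Num.floor (x + c) by apply: le_floor; rewrite lerDl ltW.
have h2 : Num.floor (x + c) < Num.floor x + 2.
  have : (Num.floor (x + c))%:~R < (Num.floor x + 2)%:~R :> R.
    apply: (le_lt_trans (floor_le _)).
    have := floorD1_gt x; rewrite intrD => hx.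
    have -> : (Num.floor x + 2)%:~R = (Num.floor x)%:~R + 1 + 1 :> R.
      by rewrite intrD -addrA.
    by apply: ltrD.

  by rewrite ltr_int.
lia.
Qed.

Lemma key (R : realType) (c d : R) : 0 < c -> c < 1 -> 0 < d -> d < 1 ->
  forall N : nat,
  \sum_(1 <= n < N.+1)
      fdiff c n%:Z * fdiff d (Num.floor (c * n%:R) + 1)
  = Num.floor (d * (Num.floor (c * N.+1%:R) + 1)%:~R).
Proof.
move=> c0 c1 d0 d1; elim=> [|N IH].
  rewrite big_geq // mulr1.
  have -> : Num.floor c = 0 by apply/eqP; rewrite floor_eq add0r; apply/andP; split; [exact: ltW|done].
  by apply/esym/eqP; rewrite add0r mulr1 floor_eq add0r; apply/andP; split; [exact: ltW|done].
rewrite big_nat_recr //= IH /fdiff.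
have e1 : (N.+1%:Z + 1)%:~R = N.+2%:R :> R.
  by rewrite intrD -[N.+2]addn1 natrD pmulrn.
rewrite e1 -[N.+1%:~R]pmulrn.
set a := Num.floor (c * N.+1%:R).
have hb : c * N.+2%:R = c * N.+1%:R + c by rewrite -[N.+2]addn1 natrD mulrDr mulr1.
rewrite hb.
case: (@step_floor _ c (c * N.+1%:R) c0 c1) => ->; rewrite -/a.
  by rewrite subrr mul0r addr0.
by rewrite addrAC subrr add0r mul1r addrC subrK.
Qed.

Theorem lemma7 (R : realType) (c d : R) :
  0 < c -> c < 1 -> 0 < d -> d < 1 -> reals.irrational c -> reals.irrational d ->
  forall t : R, 0 <= t ->
  \sum_(1 <= n < (absz (Num.floor t)).+1)
      fdiff c n%:Z * fdiff d (Num.floor (c * n%:R) + 1)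
  = Num.floor (d * (Num.floor (c * (Num.floor t + 1)%:~R) + 1)%:~R).
Proof.
move=> c0 c1 d0 d1 _ _ t t0.
have hf : Num.floor t = (absz (Num.floor t))%:Z.
  by rewrite gez0_abs // floor_ge0.
rewrite (@key _ c d c0 c1 d0 d1) {2}hf.
congr (Num.floor (d * (Num.floor (c * _) + 1)%:~R)).
by rewrite addrC -intS pmulrn.
Qed.
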